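(* Let $n\geq 2$ and let $T$ be a rooted binary phylogenetic $X$-tree with $|X|=n$ (edge lengths not yet fixed), with $c_T$ cherries. Let $X'\subset X$ consist of exactly one leaf from each cherry of $T$ (so $|X'|=c_T$), and let $\widetilde T=T_{\widetilde X}$ with $\widetilde X=X\setminus X'$. Then there exist strictly positive edge lengths $\lambda_1,\ldots,\lambda_{2n-2}$ for $T$ such that the ranking $\pi_T$ is strict and reversible with respect to $X'$, the leaf $x_1=\arg\max_{x\in X}FP_T(x)$ belongs to $\widetilde X$, and the leaf $x'=\arg\min_{x\in X}FP_T(x)$ does not belong to $\widetilde X$. In particular, $FP_T(x_1)>FP_T(x_2)>\cdots>FP_T(x_n)$ for a suitable labelling, and $FP_{\widetilde T}(x_1)<FP_{\widetilde T}(\widetilde x_2)<\cdots<FP_{\widetilde T}(\widetilde x_{n-c_T})$, where $\widetilde X=\{x_1,\widetilde x_2,\ldots,\widetilde x_{n-c_T}\}$ and $FP_T(\widetilde x_i)>FP_T(\widetilde x_j)$ if and only if $FP_{\widetilde T}(\widetilde x_i)<FP_{\widetilde T}(\widetilde x_j)$.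
   Context: A rooted binary phylogenetic $X$-tree ($X$ a finite nonempty set, $|X|=n$) is a rooted tree whose root $\rho$ has in-degree 0 and out-degree 2, all edges directed away from $\rho$, all other interior vertices have in-degree 1 and out-degree 2, and whose leaves are bijectively labelled by $X$ (for $|X|=1$ the tree may be a single vertex); it has $2n-2$ edges. Every edge $e$ has a strictly positive length $\lambda_e$. The Fair Proportion index of $x\in X$ is $FP_T(x)=\sum_{e\in P(T;\rho,x)}\lambda_e/D_e$, where $P(T;\rho,x)$ is the path from $\rho$ to $x$ and $D_e$ is the number of leaves descended from $e$. A cherry is a pair of leaves with the same parent. For $Y\subseteq X$, the induced subtree $T_Y$ is obtained from the minimal subtree of $T$ connecting $Y$ by suppressing all non-root vertices of in- and out-degree 1, adding the lengths of merged edges; if the root then has out-degree 1, it and its incident edge are deleted. The ranking $\pi_T$ orders $X$ by decreasing $FP_T$; it is strict if all values $FP_T(x)$ are pairwise distinct. For $X'\subset X$, $\widetilde X=X\setminus X'$ and $\widetilde T=T_{\widetilde X}$, a strict ranking $\pi_T$ is reversible with respect to $X'$ if for all distinct $x_i,x_j\in\widetilde X$, $FP_T(x_i)>FP_T(x_j)$ implies $FP_{\widetilde T}(x_i)<FP_{\widetilde T}(x_j)$. *)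

(* Defs.v *)
From HB Require Import structures.
From mathcomp Require Import all_boot all_order all_algebra.
From mathcomp Require Import reals.
Set Implicit Arguments. Unset Strict Implicit. Unset Printing Implicit Defensive.
Import Order.TTheory GRing.Theory Num.Theory.
Local Open Scope ring_scope.

Inductive tree := Lf (x : nat) | Nd (l r : tree).

(* The same trees with edge lengths: [WNd el er l r] has an edge of length [el]
   to the root of [l] and an edge of length [er] to the root of [r]. *)
Inductive wtree (R : Type) := WLf (x : nat) | WNd (el er : R) (l r : wtree R).
Arguments WLf {R} x.

Fixpoint leaves (t : tree) : seq nat :=
  match t with Lf x => [:: x] | Nd l r => leaves l ++ leaves r end.

Fixpoint tshape R (t : wtree R) : tree :=
  match t with WLf x => Lf x | WNd _ _ l r => Nd (tshape l) (tshape r) end.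

Definition wleaves R (t : wtree R) := leaves (tshape t).

Fixpoint pos_lengths (R : realType) (t : wtree R) : Prop :=
  match t with
  | WLf _ => True
  | WNd el er l r => 0 < el /\ 0 < er /\ pos_lengths l /\ pos_lengths r
  end.

(* T is a rooted binary phylogenetic X-tree, X = leaves T (labels distinct). *)
Definition phylo (t : tree) : bool := uniq (leaves t).

Fixpoint cherries (t : tree) : seq (nat * nat) :=
  match t with
  | Lf _ => [::]
  | Nd (Lf a) (Lf b) => [:: (a, b)]
  | Nd l r => cherries l ++ cherries r
  end.

(* Fair Proportion index: sum over edges e on the root-x path of
   lambda_e / D_e, D_e = number of leaves below e. *)
Fixpoint FP (R : realType) (t : wtree R) (x : nat) : R :=
  match t with
  | WLf _ => 0
  | WNd el er l r =>
      if x \in wleaves l then el / (size (wleaves l))%:R + FP l x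
      else if x \in wleaves r then er / (size (wleaves r))%:R + FP r x
      else 0
  end.

(* Restriction to the leaves in Y of the subtree spanned by Y and the root,
   suppressing degree-2 vertices; the first component is the length
   accumulated on the (pending) edge entering the returned subtree. *)
Fixpoint restr (R : realType) (Y : pred nat) (t : wtree R) : option (R * wtree R) :=
  match t with
  | WLf y => if Y y then Some (0, WLf y) else None
  | WNd el er l r =>
      match restr Y l, restr Y r with
      | Some (a, l'), Some (b, r') => Some (0, WNd (el + a) (er + b) l' r')
      | Some (a, l'), None => Some (el + a, l')
      | None, Some (b, r') => Some (er + b, r')
      | None, None => None
      end
  end.

(* Induced subtree T_Y: if the root ends up with out-degree 1, it and its
   incident (merged) edge are deleted, i.e. the pending length is dropped. *)
Definition induced (R : realType) (Y : pred nat) (t : wtree R) : option (wtree R) :=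
  omap snd (restr Y t).

Definition strict_ranking (R : realType) (t : wtree R) : Prop :=
  forall x y, x \in wleaves t -> y \in wleaves t -> x != y -> FP t x != FP t y.

(* strict pi_T is reversible w.r.t. X' (tt = induced tree on X \ X') *)
Definition reversible (R : realType) (t tt : wtree R) (X' : seq nat) : Prop :=
  strict_ranking t /\
  forall xi xj, xi \in wleaves t -> xi \notin X' -> xj \in wleaves t -> xj \notin X' ->
    xi != xj -> FP t xi > FP t xj -> FP tt xi < FP tt xj.

(* Main.v *)
Require Import Defs.
From HB Require Import structures.
From mathcomp Require Import all_boot all_order all_algebra.
From mathcomp Require Import reals.
From mathcomp Require Import ring lra.
Require Import Defs.
Import Order.TTheory GRing.Theory Num.Theory.
Local Open Scope ring_scope.
Set Implicit Arguments. Unset Strict Implicit.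

Section Aux.
Variables (R : realType) (Y : pred nat).

Fixpoint FPY (t : wtree R) (x : nat) : R :=
  match t with
  | WLf _ => 0
  | WNd el er l r =>
      if x \in wleaves l then el / (count Y (wleaves l))%:R + FPY l x
      else if x \in wleaves r then er / (count Y (wleaves r))%:R + FPY r x
      else 0
  end.

Lemma restr_leaves (W : wtree R) :
  match restr Y W with
  | None => filter Y (wleaves W) = [::]
  | Some (a, t') => wleaves t' = filter Y (wleaves W)
  end.
Proof.
elim: W => [y|el er l IHl r IHr] /=.
  by rewrite /wleaves /=; case: (Y y).
move: IHl IHr; rewrite /wleaves /= filter_cat.
case: (restr Y l) => [[a l']|]; case: (restr Y r) => [[b r']|] //= -> ->.
- by [].
- by rewrite cats0.
- by [].
- by [].
Qed.

Lemma restr_FP (W : wtree R) a t' x :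
  restr Y W = Some (a, t') -> x \in wleaves W -> Y x ->
  a / (size (wleaves t'))%:R + FP t' x = FPY W x.
Proof.
elim: W a t' => [y|el er l IHl r IHr] a t' /=.
  case Hy: (Y y) => // -[<- <-] _ _; by rewrite mul0r add0r.
move=> E Hx HY.
have Hl := restr_leaves l; have Hr := restr_leaves r.
have Hcat : wleaves (WNd el er l r) = wleaves l ++ wleaves r by [].
rewrite Hcat mem_cat in Hx.
case Exl: (x \in wleaves l).
  move: E Hl; case El: (restr Y l) => [[a1 l1]|]; last first.
    move=> _ Hl; have: x \in filter Y (wleaves l) by rewrite mem_filter HY Exl.
    by rewrite Hl.
  move=> E Hl1.
  have IH := IHl _ _ El Exl HY.
  have Hsz : size (wleaves l1) = count Y (wleaves l) by rewrite Hl1 size_filter.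
  have Hx1 : x \in wleaves l1 by rewrite Hl1 mem_filter HY Exl.
  move: E Hr; case: (restr Y r) => [[b1 r1]|] /=.
    move=> [<- <-] _ /=. rewrite Hx1 -IH Hsz; ring.
  move=> [<- <-] _. rewrite -IH Hsz; ring.
rewrite Exl /= in Hx; rewrite Hx.
move: E Hr; case Er: (restr Y r) => [[b1 r1]|]; last first.
  move=> _ Hr; have: x \in filter Y (wleaves r) by rewrite mem_filter HY Hx.
  by rewrite Hr.
move=> E Hr1.
have IH := IHr _ _ Er Hx HY.
have Hsz : size (wleaves r1) = count Y (wleaves r) by rewrite Hr1 size_filter.
move: E Hl; case: (restr Y l) => [[a1 l1]|] /=.
  move=> [<- <-] Hl1 /=.
  have -> : (x \in wleaves l1) = false by rewrite Hl1 mem_filter Exl andbF.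
  have Hx1 : x \in wleaves r1 by rewrite Hr1 mem_filter HY Hx.
  rewrite Hx1 -IH Hsz; ring.
move=> [<- <-] _. rewrite -IH Hsz; ring.
Qed.
End Aux.

Definition isNd (s : tree) : bool := if s is Nd _ _ then true else false.

Lemma cherries_cat l r : isNd l || isNd r -> cherries (Nd l r) = cherries l ++ cherries r.
Proof. by case: l => [a|l1 l2]; case: r => [b|r1 r2]. Qed.

Lemma cherry_leaves t c : c \in cherries t -> c.1 \in leaves t /\ c.2 \in leaves t.
Proof.
elim: t => [a|l IHl r IHr] //.
have -> : leaves (Nd l r) = leaves l ++ leaves r by [].
case Hlr: (isNd l || isNd r).
  rewrite cherries_cat // mem_cat => /orP [/IHl|/IHr] [H1 H2];
  by rewrite !mem_cat H1 H2 ?orbT.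
move: Hlr; case: l {IHl} => [a|//]; case: r {IHr} => [b|//] _ /=.
by rewrite inE => /eqP -> /=; rewrite !inE !eqxx orbT.
Qed.

Lemma cherry_exists t : isNd t -> exists c, c \in cherries t.
Proof.
elim: t => [a|l IHl r IHr] // _.
case Hlr: (isNd l || isNd r).
  rewrite cherries_cat //; case/orP: Hlr => [/IHl|/IHr] [c Hc]; exists c;
  by rewrite mem_cat Hc ?orbT.
move: Hlr; case: l {IHl} => [a|//]; case: r {IHr} => [b|//] _ /=.
by exists (a, b); rewrite inE.
Qed.

Lemma cherries_subl l r c : c \in cherries l -> c \in cherries (Nd l r).
Proof.
case: l => [a|l1 l2] Hc; first by [].
by rewrite cherries_cat // mem_cat Hc.
Qed.

Lemma cherries_subr l r c : c \in cherries r -> c \in cherries (Nd l r).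
Proof.
case: r => [a|r1 r2] Hc; first by [].
by rewrite cherries_cat ?orbT // mem_cat Hc orbT.
Qed.

Section Build.
Variables (R : realType) (Y : pred nat).

Fixpoint good (t : tree) : Prop :=
  match t with
  | Lf _ => True
  | Nd l r => (0 < count Y (leaves l ++ leaves r))%N /\
              (count Y (leaves l ++ leaves r) < size (leaves l ++ leaves r))%N /\
              good l /\ good r
  end.

Lemma goodP t : (forall c, c \in cherries t -> Y c.1 != Y c.2) -> good t.
Proof.
elim: t => [a|l IHl r IHr] //= H.
split; last split; last split.
- have [c Hc] := @cherry_exists (Nd l r) isT.
  have [H1 H2] := cherry_leaves Hc. have := H c Hc.
  rewrite -has_count; case E1: (Y c.1) => /= E2.
    by apply/hasP; exists c.1.
  by apply/hasP; exists c.2 => //; move: E2; case: (Y c.2).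
- have [c Hc] := @cherry_exists (Nd l r) isT.
  have [H1 H2] := cherry_leaves Hc. have E2 := H c Hc.
  have : has (predC Y) (leaves (Nd l r)).
    case E1: (Y c.1) in E2.
      apply/hasP; exists c.2 => //=; move: E2; case: (Y c.2) => //.
    by apply/hasP; exists c.1 => //=; rewrite E1.
  rewrite has_count -(count_predC Y (leaves (Nd l r))) /= => Hp.
  move: Hp; set a := count Y _; set b := count _ _ => Hp.
  by rewrite -addn1 leq_add2l.
- by apply: IHl => c Hc; apply: H; apply: cherries_subl.
- by apply: IHr => c Hc; apply: H; apply: cherries_subr.
Qed.

Definition nL (s : tree) : R := (size (leaves s))%:R.
Definition nY (s : tree) : R := (count Y (leaves s))%:R.
Definition wt (s : tree) : R := (nY s)^-1 - (nL s)^-1.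

Fixpoint Bd (t : tree) : R :=
  match t with Lf _ => 1 | Nd l r => 3 + Bd l + Bd r end.

Lemma Bd_gt0 t : 0 < Bd t.
Proof. elim: t => [a|l IHl r IHr] /=; lra. Qed.

Definition elen (p : nat -> R) (s : tree) (c : R) : R :=
  if s is Lf x then p x else c / wt s.

Fixpoint bld (p : nat -> R) (t : tree) : wtree R :=
  match t with
  | Lf x => WLf x
  | Nd l r => WNd (elen p l 1) (elen p r (2 + Bd l)) (bld p l) (bld p r)
  end.

Definition icn (s : tree) (c : R) : R := if isNd s then c / wt s / nL s else 0.
Definition igc (s : tree) (c : R) : R := if isNd s then c else 0.

Fixpoint Af (t : tree) (x : nat) : R :=
  match t with
  | Lf _ => 0
  | Nd l r => if x \in leaves l then icn l 1 + Af l x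
              else if x \in leaves r then icn r (2 + Bd l) + Af r x else 0
  end.

Fixpoint gn (t : tree) (x : nat) : R :=
  match t with
  | Lf _ => 0
  | Nd l r => if x \in leaves l then igc l 1 + gn l x
              else if x \in leaves r then igc r (2 + Bd l) + gn r x else 0
  end.

Lemma tshape_bld p t : tshape (bld p t) = t.
Proof. by elim: t => [a|l IHl r IHr] //=; rewrite IHl IHr. Qed.

Lemma wleaves_bld p t : wleaves (bld p t) = leaves t.
Proof. by rewrite /wleaves tshape_bld. Qed.

Lemma wt_pos s : good s -> isNd s -> 0 < wt s.
Proof.
case: s => [//|l r] /= [H1 [H2 _]] _.
rewrite /wt /nY /nL /= subr_gt0 ltf_pV2 ?ltr_nat //;
rewrite posrE ltr0n //; exact: leq_ltn_trans H2.
Qed.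

Lemma FP_bld p t x : x \in leaves t -> isNd t -> FP (bld p t) x = Af t x + p x.
Proof.
elim: t x => [a|l IHl r IHr] x //= Hx _.
rewrite !wleaves_bld.
have child : forall s c, x \in leaves s ->
   (x \in leaves s -> isNd s -> FP (bld p s) x = Af s x + p x) ->
   elen p s c / (size (leaves s))%:R + FP (bld p s) x = icn s c + Af s x + p x.
  move=> [y|s1 s2] c Hs IH.
    by move: Hs; rewrite inE => /eqP ->; rewrite /icn /= divr1; ring.
  by rewrite IH // /icn /nL /elen /= addrA.
case E: (x \in leaves l) => /=; first by apply: child => // *; apply: IHl.
rewrite mem_cat E /= in Hx; rewrite Hx; by apply: child => // *; apply: IHr.
Qed.

Lemma FPY_bld p t x : good t -> Y x -> x \in leaves t -> isNd t ->
  FPY Y (bld p t) x = Af t x + gn t x + p x.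
Proof.
elim: t x => [a|l IHl r IHr] x //= [_ [_ [gl gr]]] HY Hx _.
rewrite !wleaves_bld.
have child : forall s c, good s -> x \in leaves s ->
   (x \in leaves s -> isNd s -> FPY Y (bld p s) x = Af s x + gn s x + p x) ->
   elen p s c / (count Y (leaves s))%:R + FPY Y (bld p s) x =
     icn s c + Af s x + (igc s c + gn s x) + p x.
  move=> [y|s1 s2] c gs Hs IH.
    move: Hs; rewrite inE => /eqP Exy; subst x.
    by rewrite /= HY /icn /igc /= divr1; ring.
  rewrite IH // /icn /igc /elen /=.
  have wp := @wt_pos (Nd s1 s2) gs isT.
  have -> : c / wt (Nd s1 s2) / (count Y (leaves s1 ++ leaves s2))%:R =
            c / wt (Nd s1 s2) / nL (Nd s1 s2) + c / wt (Nd s1 s2) * wt (Nd s1 s2).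
    rewrite [X in _ = _ + _ * X]/wt /nY /=; ring.
  rewrite divfK; last by rewrite gt_eqF.
  ring.
case E: (x \in leaves l) => /=; first by apply: child => // *; apply: IHl.
rewrite mem_cat E /= in Hx; rewrite Hx; by apply: child => // *; apply: IHr.
Qed.

Lemma gn_bounds t x : 0 <= gn t x < Bd t.
Proof.
elim: t => [a|l IHl r IHr] /=; first lra.
have bl := Bd_gt0 l; have br := Bd_gt0 r.
move: IHl IHr => /andP [l1 l2] /andP [r1 r2].
rewrite /igc; case: (x \in leaves l); case: (isNd l); case: (x \in leaves r);
  case: (isNd r); apply/andP; split; lra.
Qed.

Lemma gn_inj t x y : uniq (leaves t) -> good t -> x \in leaves t -> y \in leaves t ->
  Y x -> Y y -> x != y -> gn t x != gn t y.
Proof.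
elim: t x y => [a|l IHl r IHr] x y.
  by move=> _ _; rewrite !inE => /eqP -> /eqP ->; rewrite eqxx.
rewrite /= cat_uniq => /and3P [ul dis ur] [c1 [c2 [gl gr]]] Hx Hy HYx HYy nxy.
have cross : forall u v, u \in leaves l -> v \in leaves r -> v \notin leaves l -> Y u -> Y v ->
   gn (Nd l r) u != gn (Nd l r) v.
  move=> u v Hu Hv Hv' Yu Yv /=; rewrite Hu (negbTE Hv') Hv.
  have := gn_bounds l u; have := gn_bounds r v; have := Bd_gt0 l.
  move: c2 Hu Hv; rewrite /igc; case: l {IHl ul dis c1 gl Hx Hy Hv'} => [a|l1 l2];
   case: r {IHr ur gr} => [b|r1 r2] /= c2 Hu Hv.
  - move: Hu Hv c2; rewrite !inE => /eqP <- /eqP <-.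
    by rewrite /= Yu Yv.
  - move=> ? /andP [? ?] /andP [? ?]; apply/negP => /eqP; lra.
  - move=> ? /andP [? ?] /andP [? ?]; apply/negP => /eqP; lra.
  - move=> ? /andP [? ?] /andP [? ?]; apply/negP => /eqP; lra.
have notl : forall v, v \in leaves r -> v \notin leaves l.
  move=> v Hv; apply/negP => Hvl; move/negP: dis; apply; apply/hasP; exists v => //.
move: Hx Hy; rewrite !mem_cat => Hx Hy.
case Exl: (x \in leaves l); case Eyl: (y \in leaves l).
- by rewrite /= ?Exl ?Eyl; apply/negP => /eqP /addrI /eqP; apply/negP; apply: IHl.
- rewrite Eyl /= in Hy.
  by have := cross x y Exl Hy (negbT Eyl) HYx HYy; rewrite /= ?Exl ?Eyl.
- rewrite Exl /= in Hx.
  by have := cross y x Eyl Hx (negbT Exl) HYy HYx; rewrite /= ?Exl ?Eyl eq_sym.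
- rewrite Exl /= in Hx; rewrite Eyl /= in Hy.
  by rewrite /= ?Exl ?Eyl ?Hx ?Hy; apply/negP => /eqP /addrI /eqP; apply/negP; apply: IHr.
Qed.

Lemma pos_bld p t : good t -> (forall x, x \in leaves t -> 0 < p x) -> pos_lengths (bld p t).
Proof.
elim: t => [a|l IHl r IHr] //= [_ [_ [gl gr]]] Hp.
have child : forall s c, good s -> 0 < c -> (forall x, x \in leaves s -> 0 < p x) ->
   0 < elen p s c.
  move=> [y|s1 s2] c gs cp Hs /=; first by apply: Hs; rewrite inE.
  by rewrite divr_gt0 // wt_pos.
have Hl : forall x, x \in leaves l -> 0 < p x by move=> x Hx; apply: Hp; rewrite mem_cat Hx.
have Hr : forall x, x \in leaves r -> 0 < p x by move=> x Hx; apply: Hp; rewrite mem_cat Hx orbT.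
have := Bd_gt0 l => bl.
split; first by apply: child => //; lra.
split; first by apply: child => //; lra.
by split; [apply: IHl | apply: IHr].
Qed.

End Build.

Definition ivn (R : realType) (x : nat) : R := (x.+1)%:R^-1.

Lemma argmin_ex (R : realType) (f : nat -> R) (P : pred nat) (s : seq nat) :
  has P s -> exists2 x, x \in s & P x /\ (forall y, y \in s -> P y -> f x <= f y).
Proof.
elim: s => [//|a s IH] /=.
case Hs: (has P s).
  have [x Hx [Px Hmin]] := IH Hs.
  case Pa: (P a) => _.
    case: (lerP (f a) (f x)) => Hax.
      exists a; first by rewrite inE eqxx.
      split=> // y; rewrite inE => /orP [/eqP -> //|Hy Py].
      exact: le_trans Hax (Hmin y Hy Py).
    exists x; first by rewrite inE Hx orbT.
    split=> // y; rewrite inE => /orP [/eqP -> _|Hy Py]; last exact: Hmin.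
    exact: ltW.
  exists x; first by rewrite inE Hx orbT.
  split=> // y; rewrite inE => /orP [/eqP ->|Hy Py]; last exact: Hmin.
  by rewrite Pa.
rewrite orbF => Pa; exists a; first by rewrite inE eqxx.
split=> // y; rewrite inE => /orP [/eqP -> //|Hy Py].
by move/negP: Hs; case; apply/hasP; exists y.
Qed.

Lemma le_sum_norm (R : realType) (f : nat -> R) (s : seq nat) x :
  x \in s -> `|f x| <= \sum_(y <- s) `|f y|.
Proof.
elim: s => [//|a s IH]; rewrite inE big_cons => /orP [/eqP ->|Hx].
  by rewrite lerDl sumr_ge0.
by apply: le_trans (IH Hx) _; rewrite lerDr.
Qed.

Theorem theorem2 (R : realType) (T : tree) (X' : seq nat) :
  phylo T -> (2 <= size (leaves T))%N ->
  (forall x, x \in X' -> exists2 c, c \in cherries T & x = c.1 \/ x = c.2) ->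
  (forall c, c \in cherries T -> (c.1 \in X') != (c.2 \in X')) ->
  exists (W : wtree R),
    [/\ tshape W = T, pos_lengths W &
    exists2 Wt : wtree R, induced (fun x => x \notin X') W = Some Wt &
      [/\ reversible W Wt X',
          exists2 x1, x1 \in leaves T &
            x1 \notin X' /\
            (forall y, y \in leaves T -> y != x1 -> FP W y < FP W x1) &
          exists2 x', x' \in leaves T &
            x' \in X' /\
            (forall y, y \in leaves T -> y != x' -> FP W x' < FP W y)]].
Proof.
move=> HT Hn _ Hch.
pose Y : pred nat := fun x => x \notin X'.
have gT : good Y T.
  apply: goodP => c Hc; rewrite /Y; move: (Hch c Hc).
  by case: (c.1 \in X'); case: (c.2 \in X').
have NdT : isNd T by case: T Hn gT {HT Hch}.
have [c1 [c2 _]] : (0 < count Y (leaves T))%N /\ (count Y (leaves T) < size (leaves T))%N /\ True.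
  by case: T Hn gT NdT {HT Hch} => //= l r _ [? [? _]].
have hasY : has Y (leaves T) by rewrite has_count.
have hasX : has (predC Y) (leaves T).
  rewrite has_count -(count_predC Y) in c2 *; move: c2.
  by set a := count Y _; set b := count _ _ => H; rewrite -(ltn_add2l a) addn0.
pose L := leaves T.
pose Bs : R := \sum_(y <- L) `|Af R Y T y|.
pose K : R := Bs + 2 + Bd R T.
pose FPv (x : nat) : R := if Y x then K - gn R T x / 2 else Bs + ivn R x.
pose p (x : nat) : R := FPv x - Af R Y T x.
pose W := bld Y p T.
have hA : forall x, x \in L -> `|Af R Y T x| <= Bs by move=> x Hx; exact: le_sum_norm.
have hB := Bd_gt0 R T.
have hg : forall x, 0 <= gn R T x < Bd R T by move=> x; exact: gn_bounds.
have inv1 : forall x : nat, 0 < ivn R x :> R /\ ivn R x <= 1 :> R.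
  move=> x; rewrite /ivn invr_gt0 ltr0n; split=> //.
  by rewrite invf_le1 ?ltr0n // ler1n.
have FPW : forall x, x \in L -> FP W x = FPv x.
  by move=> x Hx; rewrite FP_bld // /p; ring.
have sep : forall x y, Y x -> ~~ Y y -> FPv y < FPv x.
  move=> x y Yx Yy; rewrite /FPv (negbTE Yy) Yx.
  have := hg x; have := inv1 y => -[i1 i2] /andP [g1 g2].
  have : 0 <= Bs by rewrite sumr_ge0.
  rewrite /K => hBs; lra.
have lenW : wleaves W = L by rewrite wleaves_bld.
exists W; split.
- exact: tshape_bld.
- apply: pos_bld => // x Hx; rewrite /p /FPv.
  have := hA x Hx; have := hg x; have := inv1 x => -[i1 i2] /andP [g1 g2] HA.
  have := ler_norm (Af R Y T x) => HA2.
  case: (Y x); rewrite /K; lra.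
have Hr := restr_leaves Y W.
case E: (restr Y W) Hr => [[a Wt]|] Hr; last first.
  have : has Y (wleaves W) by rewrite lenW.
  by rewrite has_filter Hr.
exists Wt; first by rewrite /induced E.
have FPWt : forall x, x \in L -> Y x -> FP Wt x = K + gn R T x / 2 - a / (size (wleaves Wt))%:R.
  move=> x Hx Yx.
  have := restr_FP E; rewrite lenW => /(_ x Hx Yx).
  rewrite FPY_bld // /p /FPv Yx => H.
  have -> : FP Wt x = (a / (size (wleaves Wt))%:R + FP Wt x) - a / (size (wleaves Wt))%:R by ring.
  by rewrite H {1}(splitr (gn R T x)); ring.
have injv : forall x y, x \in L -> y \in L -> x != y -> FPv x != FPv y.
  move=> x y Hx Hy nxy.
  case Yx: (Y x); case Yy: (Y y).
  - rewrite /FPv Yx Yy; apply/negP => /eqP H.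
    have : gn R T x == gn R T y by apply/eqP; lra.
    by move=> E'; move: (@gn_inj R Y _ _ _ HT gT Hx Hy Yx Yy nxy); rewrite E'.
  - by rewrite gt_eqF // sep // Yy.
  - by rewrite lt_eqF // sep // Yx.
  - rewrite /FPv /ivn Yx Yy; apply/negP => /eqP /addrI /invr_inj /eqP.
    by rewrite eqr_nat eqSS; apply/negP.
split.
- split.
    move=> x y; rewrite lenW => Hx Hy nxy; rewrite !FPW //; exact: injv.
  move=> xi xj; rewrite lenW => Hi Yi Hj Yj nij.
  rewrite !FPW // !FPWt // /FPv.
  rewrite -/(Y xi) -/(Y xj) in Yi Yj; rewrite Yi Yj => H; lra.
- have [x1 Hx1 [Yx1 Hmin]] := argmin_ex (gn R T) hasY.
  exists x1 => //; split => // y Hy nyx.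
  rewrite !FPW //.
  case Yy: (Y y); last by apply: sep => //; rewrite Yy.
  have := injv y x1 Hy Hx1 nyx; have := Hmin y Hy Yy.
  rewrite /FPv Yy Yx1 => H1 H2; rewrite lt_neqAle H2 /=; lra.
- have [x2 Hx2 [Yx2 Hmin]] := argmin_ex (fun y => ivn R y : R) hasX.
  exists x2 => //; split; first by move: Yx2; rewrite /= /Y negbK.
  move=> y Hy nyx; rewrite !FPW //.
  case Yy: (Y y); first by apply: sep => //.
  have := injv x2 y Hx2 Hy; rewrite eq_sym => /(_ nyx).
  have := Hmin y Hy; rewrite /= Yy => /(_ isT).
  move: Yx2; rewrite /= /FPv Yy => /negbTE ->.
  move=> H1 H2; rewrite lt_neqAle H2 /=; lra.
Qed.
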